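(* Let $\mathcal{M}=(M_i\colon i\in K)$ be a family of matroids on a common ground set $E$. Let $(I_i\colon i\in K)$ be a family of pairwise disjoint sets such that $I_i$ is independent in $M_i$ for all $i\in K$, and let $e\in E\setminus\bigcup_{i\in K}I_i$. Then exactly one of the following two statements holds. (1) There are a family of sets $(J_i\colon i\in K)$ and $k\in K$ such that: (a) $J_i$ is independent in $M_i$ for all $i$; (b) $J_i\cap J_j=\emptyset$ for $i\neq j$; (c) $\bigcup_{i\in K}J_i=\bigcup_{i\in K}I_i\cup\{e\}$; (d) $\sum_{i\in K}|I_i\triangle J_i|<\aleph_0$; (e) $\mathrm{span}_{M_i}(J_i)=\mathrm{span}_{M_i}(I_i)$ for all $i\neq k$, and $\mathrm{span}_{M_k}(J_k\setminus\{f\})=\mathrm{span}_{M_k}(I_k)$ for some $f\in J_k$. (2) There exists $X\subseteq\bigcup_{i\in K}I_i$ such that for every $i\in K$ the set $I_i\cap X$ spans $X\cup\{e\}$ in $M_i$.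
   Context: Matroids here are possibly infinite: a matroid is a pair $(E,\mathcal{I})$ with $\mathcal{I}\subseteq\mathcal{P}(E)$ such that (1) $\emptyset\in\mathcal{I}$; (2) $\mathcal{I}$ is closed under subsets; (3) for all $I,B\in\mathcal{I}$ with $B$ maximal in $\mathcal{I}$ and $I$ not maximal, there is $x\in B\setminus I$ with $I\cup\{x\}\in\mathcal{I}$; (4) for every $X\subseteq E$, every $I\in\mathcal{I}$ with $I\subseteq X$ extends to a maximal element of $\mathcal{I}\cap\mathcal{P}(X)$. Circuits are minimal dependent sets. A set $X$ spans $e$ in $M$ if $e\in X$ or there is a circuit $C\ni e$ with $C\setminus\{e\}\subseteq X$; $\mathrm{span}_M(X)$ is the set of elements spanned by $X$, and $X$ spans a set $Y$ if $Y\subseteq\mathrm{span}_M(X)$. *)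

(* Defs.v *)
(* sets are predicates E -> Prop. The ground set of a matroid
   on the type E is the whole type E. *)
From Stdlib Require Import List.

Definition subset {E : Type} (A B : E -> Prop) : Prop := forall x, A x -> B x.
Definition set_eq {E : Type} (A B : E -> Prop) : Prop := forall x, A x <-> B x.
Definition setU1 {E : Type} (A : E -> Prop) (y : E) : E -> Prop :=
  fun x => A x \/ x = y.
Definition setD1 {E : Type} (A : E -> Prop) (y : E) : E -> Prop :=
  fun x => A x /\ x <> y.

Definition maximal {E : Type} (P : (E -> Prop) -> Prop) (B : E -> Prop) : Prop :=
  P B /\ forall J, P J -> subset B J -> subset J B.

Record matroid (E : Type) := Matroid {
  indep : (E -> Prop) -> Prop;
  indep_empty : indep (fun _ => False);
  indep_sub : forall A B, indep B -> subset A B -> indep A;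
  indep_aug : forall I B, indep I -> maximal indep B -> ~ maximal indep I ->
      exists x, B x /\ ~ I x /\ indep (setU1 I x);
  indep_max : forall (X I : E -> Prop), indep I -> subset I X ->
      exists B, subset I B /\ maximal (fun J => indep J /\ subset J X) B
}.
Arguments indep {E} m _.

Definition circuit {E : Type} (M : matroid E) (C : E -> Prop) : Prop :=
  ~ indep M C /\ forall D, subset D C -> ~ indep M D -> subset C D.

Definition spans_elt {E : Type} (M : matroid E) (X : E -> Prop) (e : E) : Prop :=
  X e \/ exists C, circuit M C /\ C e /\ subset (setD1 C e) X.

Definition span {E : Type} (M : matroid E) (X : E -> Prop) : E -> Prop :=
  fun e => spans_elt M X e.

Definition spans {E : Type} (M : matroid E) (X Y : E -> Prop) : Prop :=
  subset Y (span M X).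

Definition bigU {K E : Type} (I : K -> E -> Prop) : E -> Prop :=
  fun x => exists i, I i x.

Definition symdiff {E : Type} (A B : E -> Prop) : E -> Prop :=
  fun x => (A x /\ ~ B x) \/ (B x /\ ~ A x).

(* sum_{i in K} |I_i triangle J_i| < aleph_0 : the disjoint union of the
   symmetric differences is finite *)
Definition finite_sum_symdiff {K E : Type} (I J : K -> E -> Prop) : Prop :=
  exists l : list (K * E), forall i x, symdiff (I i) (J i) x -> In (i, x) l.

(* Main.v *)
Require Import Defs.
From Stdlib Require Import List Classical FunctionalExtensionality PropExtensionality ClassicalEpsilon Arith Lia.

Lemma set_ext {E : Type} (A B : E -> Prop) : (forall x, A x <-> B x) -> A = B.
Proof. intros H; apply functional_extensionality; intros x; apply propositional_extensionality; auto. Qed.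

Section Mat.
Context {E : Type} (M : matroid E).

Definition base B := maximal (indep M) B.

Lemma ext_base A : indep M A -> exists B, base B /\ subset A B.
Proof.
  intros HA. destruct (indep_max _ M (fun _ => True) A HA (fun _ _ => Logic.I)) as [B [HAB [[HB _] HBm]]].
  exists B. split; [split; [exact HB|] | exact HAB].
  intros J HJ HBJ. apply HBm; [split; [exact HJ | intros _ _; exact Logic.I] | exact HBJ].
Qed.

Lemma L0 A B : indep M A -> base B -> exists B', base B' /\ subset A B' /\ subset B' (fun x => A x \/ B x).
Proof.
  intros HA HB.
  destruct (indep_max _ M (fun x => A x \/ B x) A HA (fun x h => or_introl h)) as [B' [HAB' [[HB'i HB'X] HB'm]]].
  exists B'. split; [|split; auto].
  destruct (classic (maximal (indep M) B')) as [Hm|Hnm]; [exact Hm|exfalso].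
  destruct (indep_aug _ M B' B HB'i HB Hnm) as [x [HBx [HnB'x Hind]]].
  apply HnB'x. apply (HB'm (setU1 B' x)).
  - split; [exact Hind| intros z [hz|hz]; [apply HB'X; exact hz| subst; right; exact HBx]].
  - intros z hz; left; exact hz.
  - right; reflexivity.
Qed.

Lemma BPM B B' x y : base B -> base B' -> subset B' (setU1 B x) -> B y -> ~ B' y -> indep M (setU1 (setD1 B y) x).
Proof.
  intros HB HB' Hsub Hy Hny.
  assert (Hnm : ~ maximal (indep M) (setD1 B y)).
  { intros [_ Hm]. destruct HB as [HBi _]. assert (h := Hm B HBi (fun z hz => proj1 hz) y Hy). destruct h as [_ h]; apply h; reflexivity. }
  destruct HB as [HBi HBm].
  destruct (indep_aug _ M (setD1 B y) B' (indep_sub _ M _ _ HBi (fun z hz => proj1 hz)) HB' Hnm) as [w [HB'w [Hnw Hind]]].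
  destruct (Hsub w HB'w) as [HBw | Hw].
  - exfalso. apply Hnw. split; [exact HBw|]. intro; subst; contradiction.
  - subst; exact Hind.
Qed.

Lemma circ_minus C y : circuit M C -> C y -> indep M (setD1 C y).
Proof. intros [Hd Hm] Hy. apply NNPP; intro Hn. destruct (Hm _ (fun z hz => proj1 hz) Hn y Hy) as [_ h]. apply h; reflexivity. Qed.

Lemma EXCH B C x y : base B -> circuit M C -> C x -> (forall c, C c -> c <> x -> B c) -> ~ B x -> C y -> y <> x -> indep M (setU1 (setD1 B y) x).
Proof.
  intros HB HC Hx HCB HnBx Hy Hyx.
  destruct (L0 (setD1 C y) B (circ_minus C y HC Hy) HB) as [B' [HB' [H1 H2]]].
  apply (BPM B B' x y HB HB').
  - intros z hz. destruct (H2 z hz) as [[hc hne]|hb]; [|left; exact hb].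
    destruct (classic (z = x)) as [->|hzx]; [right; reflexivity| left; apply HCB; auto].
  - apply HCB; auto.
  - intro HB'y. apply (proj1 HC). apply (indep_sub _ M C B' (proj1 HB')). intros z hz.
    destruct (classic (z = y)) as [->|hzy]; [exact HB'y| apply H1; split; auto].
Qed.

Lemma EXCH_I A C x y : indep M A -> circuit M C -> C x -> (forall c, C c -> c <> x -> A c) -> ~ A x -> C y -> y <> x -> indep M (setU1 (setD1 A y) x).
Proof.
  intros HA HC Hx HCA HnAx Hy Hyx.
  destruct (ext_base A HA) as [B [HB HAB]].
  assert (HnBx : ~ B x).
  { intro HBx. apply (proj1 HC). apply (indep_sub _ M C B (proj1 HB)). intros z hz.
    destruct (classic (z = x)) as [->|hzx]; [exact HBx | apply HAB, HCA; auto]. }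
  apply (indep_sub _ M _ (setU1 (setD1 B y) x) (EXCH B C x y HB HC Hx (fun c hc hcx => HAB c (HCA c hc hcx)) HnBx Hy Hyx)).
  intros z [[hz hzy]|hz]; [left; split; auto | right; auto].
Qed.

Lemma FCE A x : indep M A -> ~ indep M (setU1 A x) -> exists C, circuit M C /\ C x /\ (forall c, C c -> c <> x -> A c).
Proof.
  intros HA Hdep.
  destruct (ext_base A HA) as [B [HB HAB]].
  assert (HnBx : ~ B x).
  { intro HBx. apply Hdep. apply (indep_sub _ M _ B (proj1 HB)). intros z [hz| hz]; [auto| subst; auto]. }
  pose (C := fun c => c = x \/ (B c /\ indep M (setU1 (setD1 B c) x))).
  assert (HCx : C x) by (left; reflexivity).
  assert (HCA : forall c, C c -> c <> x -> A c).
  { intros c [hc|[hBc hind]] hcx; [contradiction|]. apply NNPP; intro hnA. apply Hdep. apply (indep_sub _ M _ _ hind).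
    intros z [hz| hz]; [left; split; [auto| intro; subst; contradiction] | right; exact hz]. }
  exists C. split; [|split; auto].
  split.
  - intro HCi. destruct (L0 C B HCi HB) as [B' [HB' [H1 H2]]].
    destruct (classic (exists y, B y /\ ~ B' y)) as [[y [hy hny]]|hno].
    + apply hny. apply H1. right. split; [exact hy|]. apply (BPM B B' x y HB HB'); auto.
      intros z hz. destruct (H2 z hz) as [[hzx|[hb _]]|hb]; [right; exact hzx| left; auto | left; auto].
    + apply Hdep. apply (indep_sub _ M _ B' (proj1 HB')). intros z [hz| hz]; [| subst; apply H1; exact HCx].
      apply NNPP; intro hn. apply hno. exists z. split; auto.
  - intros D HDC HDd c hc. apply NNPP; intro hnD. apply HDd.
    destruct hc as [hc|[hBc hind]].
    + subst c. apply (indep_sub _ M D B (proj1 HB)). intros z hz. destruct (HDC z hz) as [hzx|[hb _]]; [subst; contradiction|exact hb].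
    + apply (indep_sub _ M D _ hind). intros z hz. destruct (HDC z hz) as [hzx|[hb _]]; [right; exact hzx| left; split; [exact hb| intro; subst; contradiction]].
Qed.

Lemma span_iff A x : indep M A -> (span M A x <-> A x \/ ~ indep M (setU1 A x)).
Proof.
  intros HA; split.
  - intros [h|[C [HC [Hx Hsub]]]]; [left; exact h| right]. intro hind. apply (proj1 HC). apply (indep_sub _ M C _ hind).
    intros z hz. destruct (classic (z = x)) as [->|hzx]; [right; reflexivity| left; apply Hsub; split; auto].
  - intros [h|h]; [left; exact h| right]. destruct (FCE A x HA h) as [C [HC [Hx HCA]]].
    exists C. split; [exact HC| split; [exact Hx|]]. intros z [hz hzx]. apply HCA; auto.
Qed.

Lemma span_mono A B : subset A B -> forall w, span M A w -> span M B w.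
Proof.
  intros H w [h|[C [HC [Hw Hs]]]]; [left; auto| right; exists C; split; [exact HC|split; [exact Hw| intros z hz; apply H, Hs, hz]]].
Qed.

Lemma FCU T x C1 C2 : indep M T -> ~ T x -> circuit M C1 -> C1 x -> (forall c, C1 c -> c <> x -> T c) -> circuit M C2 -> C2 x -> (forall c, C2 c -> c <> x -> T c) -> subset C1 C2.
Proof.
  intros HT HnT HC1 H1x H1T HC2 H2x H2T y hy.
  destruct (classic (y = x)) as [->|hyx]; [exact H2x|].
  apply NNPP; intro hn. apply (proj1 HC2).
  apply (indep_sub _ M C2 _ (EXCH_I T C1 x y HT HC1 H1x H1T HnT hy hyx)).
  intros z hz. destruct (classic (z = x)) as [->|hzx]; [right; reflexivity| left; split; [apply H2T; auto| intro; subst; contradiction]].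
Qed.

Lemma SPAN A C x y : indep M A -> circuit M C -> C x -> (forall c, C c -> c <> x -> A c) -> ~ A x -> C y -> y <> x -> forall w, span M A w -> span M (setU1 (setD1 A y) x) w.
Proof.
  intros HA HC Hx HCA HnAx Hy Hyx w Hw.
  assert (HA' := EXCH_I A C x y HA HC Hx HCA HnAx Hy Hyx).
  apply (span_iff _ _ HA) in Hw. apply (span_iff _ _ HA').
  destruct (classic (setU1 (setD1 A y) x w)) as [h|hnw]; [left; exact h| right].
  assert (hwx : w <> x) by (intro; subst; apply hnw; right; reflexivity).
  destruct (classic (w = y)) as [->|hwy].
  - intro hind. apply (proj1 HC). apply (indep_sub _ M C _ hind). intros z hz.
    destruct (classic (z = y)) as [->|hzy]; [right; reflexivity|].
    destruct (classic (z = x)) as [->|hzx]; [left; right; reflexivity| left; left; split; [apply HCA; auto| exact hzy]].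
  - assert (hnAw : ~ A w) by (intro h; apply hnw; left; split; auto).
    destruct Hw as [h|hdep]; [contradiction|].
    intro hind.
    destruct (ext_base _ hind) as [Th [HTh HTTh]].
    assert (hnTy : ~ Th y).
    { intro hTy. apply (proj1 HC). apply (indep_sub _ M C Th (proj1 HTh)). intros z hz.
      destruct (classic (z = y)) as [->|hzy]; [exact hTy|]. apply HTTh.
      destruct (classic (z = x)) as [->|hzx]; [left; right; reflexivity| left; left; split; [apply HCA; auto| exact hzy]]. }
    assert (HCT : forall c, C c -> c <> y -> Th c).
    { intros c hc hcy. apply HTTh. destruct (classic (c = x)) as [->|hcx]; [left; right; reflexivity| left; left; split; [apply HCA; auto| exact hcy]]. }
    assert (Hex := EXCH Th C y x HTh HC Hy HCT hnTy Hx (not_eq_sym Hyx)).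
    apply hdep. apply (indep_sub _ M _ _ Hex). intros z [hz| hz].
    + destruct (classic (z = y)) as [->|hzy]; [right; reflexivity| left; split; [apply HTTh; left; left; split; auto | intro; subst; contradiction]].
    + subst z. left; split; [apply HTTh; right; reflexivity| exact hwx].
Qed.

Lemma SPAN_EQ A C x y : indep M A -> circuit M C -> C x -> (forall c, C c -> c <> x -> A c) -> ~ A x -> C y -> y <> x -> forall w, span M (setU1 (setD1 A y) x) w <-> span M A w.
Proof.
  intros HA HC Hx HCA HnAx Hy Hyx w. split; [|apply (SPAN A C x y); auto].
  intro hw.
  assert (HA' := EXCH_I A C x y HA HC Hx HCA HnAx Hy Hyx).
  assert (HCA' : forall c, C c -> c <> y -> setU1 (setD1 A y) x c).
  { intros c hc hcy. destruct (classic (c = x)) as [->|hcx]; [right; reflexivity| left; split; [apply HCA; auto| exact hcy]]. }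
  assert (HnA'y : ~ setU1 (setD1 A y) x y).
  { intros [[_ h]|h]; [apply h; reflexivity| contradiction]. }
  assert (h := SPAN _ C y x HA' HC Hy HCA' HnA'y Hx (not_eq_sym Hyx) w hw).
  refine (span_mono _ _ _ w h).
  intros z [[hz hzx]|hz].
  - destruct hz as [[hA _]|hz]; [exact hA| contradiction].
  - subst z. apply HCA; auto.
Qed.

Lemma EX_SPAN A a b : indep M A -> ~ A a -> ~ indep M (setU1 A a) -> A b -> indep M (setU1 (setD1 A b) a) ->
  forall w, span M (setU1 (setD1 A b) a) w <-> span M A w.
Proof.
  intros HA Ha Hda Hb Hba.
  destruct (FCE A a HA Hda) as [C [HC [HCa HCA]]].
  assert (HCb : C b).
  { apply NNPP; intro hn. apply (proj1 HC). apply (indep_sub _ M C _ Hba). intros z hz.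
    destruct (classic (z = a)) as [->|hza]; [right; reflexivity| left; split; [apply HCA; auto| intro; subst; contradiction]]. }
  apply (SPAN_EQ A C a b); auto. intro; subst; contradiction.
Qed.

Lemma KEY A a b c d : indep M A -> ~ A a -> ~ indep M (setU1 A a) -> A b -> indep M (setU1 (setD1 A b) a) ->
  ~ A c -> c <> a -> ~ indep M (setU1 A c) -> A d -> indep M (setU1 (setD1 A d) c) ->
  ~ indep M (setU1 (setD1 A d) a) -> indep M (setU1 (setD1 (setU1 (setD1 A b) a) d) c).
Proof.
  intros HA Ha Hda Hb Hba Hc Hca Hdc Hd Hdcind Hdda.
  assert (HcA' : span M (setU1 (setD1 A b) a) c).
  { apply (EX_SPAN A a b HA Ha Hda Hb Hba c). apply span_iff; auto. }
  apply (span_iff _ c Hba) in HcA'. destruct HcA' as [h|hdep'].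
  { exfalso. destruct h as [[h _]|h]; contradiction. }
  destruct (FCE _ c Hba hdep') as [C' [HC' [HC'c HC'A']]].
  destruct (classic (C' d)) as [hCd|hnCd].
  - apply (EXCH_I _ C' c d Hba HC' HC'c HC'A'); auto.
    + intros [[h _]|h]; contradiction.
    + intro; subst; contradiction.
  - exfalso.
    assert (HC'a : C' a).
    { apply NNPP; intro hna. apply (proj1 HC'). apply (indep_sub _ M C' _ Hdcind). intros z hz.
      destruct (classic (z = c)) as [->|hzc]; [right; reflexivity|].
      destruct (HC'A' z hz hzc) as [[hAz hzb]|hza]; [left; split; [exact hAz| intro; subst; contradiction] | subst; contradiction]. }
    destruct (FCE (setD1 A d) a (indep_sub _ M _ _ HA (fun z hz => proj1 hz)) Hdda) as [C'' [HC'' [HC''a HC''T]]].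
    assert (hnTa : ~ setU1 (setD1 A d) c a).
    { intros [[h _]|h]; [contradiction| subst; contradiction]. }
    assert (h1 : forall z, C' z -> z <> a -> setU1 (setD1 A d) c z).
    { intros z hz hza. destruct (classic (z = c)) as [->|hzc]; [right; reflexivity|].
      destruct (HC'A' z hz hzc) as [[hAz hzb]|h]; [left; split; [exact hAz| intro; subst; contradiction]| contradiction]. }
    assert (h2 : forall z, C'' z -> z <> a -> setU1 (setD1 A d) c z).
    { intros z hz hza. left. apply HC''T; auto. }
    assert (hsub := FCU _ a C' C'' Hdcind hnTa HC' HC'a h1 HC'' HC''a h2).
    destruct (HC''T c (hsub c HC'c) Hca) as [h _]. contradiction.
Qed.

End Mat.

Section Main.
Context {E K : Type} (M : K -> matroid E).

Definition step (I : K -> E -> Prop) i x y :=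
  ~ I i x /\ ~ indep (M i) (setU1 (I i) x) /\ I i y /\ indep (M i) (setU1 (setD1 (I i) y) x).

Inductive tpath (I : K -> E -> Prop) : E -> nat -> Prop :=
| tp0 : forall x k, ~ I k x -> indep (M k) (setU1 (I k) x) -> tpath I x 0
| tpS : forall x y i n, step I i x y -> tpath I y n -> tpath I x (S n).

Inductive reach (I : K -> E -> Prop) (e : E) : E -> Prop :=
| r0 : reach I e e
| rS : forall x y i, reach I e x -> step I i x y -> reach I e y.

Definition P1 (I : K -> E -> Prop) (e : E) :=
    exists (J : K -> E -> Prop) (k : K),
      (forall i, indep (M i) (J i)) /\
      (forall i j x, i <> j -> J i x -> J j x -> False) /\
      set_eq (bigU J) (setU1 (bigU I) e) /\
      finite_sum_symdiff I J /\
      (forall i, i <> k -> set_eq (span (M i) (J i)) (span (M i) (I i))) /\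
      (exists f, J k f /\ set_eq (span (M k) (setD1 (J k) f)) (span (M k) (I k))).

Definition P2 (I : K -> E -> Prop) (e : E) :=
    exists X : E -> Prop, subset X (bigU I) /\
      forall i, spans (M i) (fun x => I i x /\ X x) (setU1 X e).

Definition hyps (I : K -> E -> Prop) (e : E) :=
  (forall i, indep (M i) (I i)) /\ (forall i j x, i <> j -> I i x -> I j x -> False) /\ ~ bigU I e.

Lemma min_nat (P : nat -> Prop) n : P n -> exists m, P m /\ forall k, P k -> m <= k.
Proof.
  revert n. intro n. induction n as [n IH] using (well_founded_induction lt_wf). intros Hn.
  destruct (classic (exists k, k < n /\ P k)) as [[k [hk hPk]]|hno]; [exact (IH k hk hPk)|].
  exists n; split; auto. intros k hk. destruct (le_lt_dec n k); auto. exfalso; apply hno; eauto.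
Qed.

Lemma P1_base I e k : hyps I e -> ~ I k e -> indep (M k) (setU1 (I k) e) -> P1 I e.
Proof.
  intros [HI [Hd He]] hk hind.
  exists (fun j x => I j x \/ (j = k /\ x = e)), k.
  split; [|split; [|split; [|split; [|split]]]].
  - intros i. destruct (classic (i = k)) as [->|hik].
    + apply (indep_sub _ _ _ _ hind). intros z [h|[_ h]]; [left|right]; auto.
    + apply (indep_sub _ _ _ _ (HI i)). intros z [h|[h _]]; [auto|contradiction].
  - intros i j x hij [hi|[hi hx]] [hj|[hj hx']].
    + exact (Hd i j x hij hi hj).
    + subst. apply He. exists i; auto.
    + subst. apply He. exists j; auto.
    + subst. apply hij; reflexivity.
  - intros x; split.
    + intros [i [h|[_ h]]]; [left; exists i; auto| right; auto].
    + intros [[i h]| h]; [exists i; left; auto| exists k; right; auto].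
  - exists ((k, e) :: nil). intros i x [[h1 h2]|[h1 h2]].
    + exfalso; apply h2; left; auto.
    + destruct h1 as [h|[h h']]; [contradiction| subst; left; reflexivity].
  - intros i hik x; split; apply span_mono.
    + intros z [h|[h _]]; [auto|contradiction].
    + intros z h; left; auto.
  - exists e. split; [right; auto|]. intros x; split; apply span_mono.
    + intros z [[h|[_ h]] h']; [auto|contradiction].
    + intros z h. split; [left; auto| intro; subst; contradiction].
Qed.

Lemma step_case I e i0 x1 m : hyps I e -> step I i0 e x1 -> tpath I x1 m ->
  (forall k, tpath I e k -> S m <= k) ->
  exists I', hyps I' x1 /\ tpath I' x1 m /\ (P1 I' x1 -> P1 I e).
Proof.
  intros [HI [Hd He]] Hst Hp Hmin.
  destruct Hst as [Hne [Hdepe [Hx1 Hindx1]]].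
  pose (I' := fun j x => (j <> i0 /\ I j x) \/ (j = i0 /\ ((I j x /\ x <> x1) \/ x = e))).
  assert (HI'ne : forall j, j <> i0 -> I' j = I j).
  { intros j hj. apply set_ext. intros x; unfold I'; split; [intros [[_ h]|[h _]]; [auto|contradiction]| intros h; left; auto]. }
  assert (HI'eq : I' i0 = setU1 (setD1 (I i0) x1) e).
  { apply set_ext. intros x; unfold I', setU1, setD1; split.
    - intros [[h _]|[_ h]]; [contradiction| exact h].
    - intros h; right; auto. }
  assert (span_I' : forall j w, span (M j) (I' j) w <-> span (M j) (I j) w).
  { intros j w. destruct (classic (j = i0)) as [->|hj].
    - rewrite HI'eq. apply EX_SPAN; auto.
    - rewrite (HI'ne j hj). tauto. }
  assert (HI'i : forall j, indep (M j) (I' j)).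
  { intros j. destruct (classic (j = i0)) as [->|hj]; [rewrite HI'eq; auto| rewrite (HI'ne j hj); auto]. }
  exists I'. split; [|split].
  - split; [exact HI'i|split].
    + intros i j x hij hi hj.
      destruct (classic (i = i0)) as [->|hi0]; destruct (classic (j = i0)) as [->|hj0].
      * contradiction.
      * rewrite HI'eq in hi; rewrite (HI'ne j hj0) in hj. destruct hi as [[h _]|h]; [apply (Hd i0 j x); auto | subst; apply He; exists j; exact hj].
      * rewrite HI'eq in hj; rewrite (HI'ne i hi0) in hi. destruct hj as [[h _]|h]; [apply (Hd i i0 x); auto | subst; apply He; exists i; exact hi].
      * rewrite (HI'ne i hi0) in hi; rewrite (HI'ne j hj0) in hj. exact (Hd i j x hij hi hj).
    + intros [j hj]. destruct (classic (j = i0)) as [->|hj0].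
      * rewrite HI'eq in hj. destruct hj as [[_ h]|h]; [apply h; reflexivity| subst; apply He; exists i0; exact Hx1].
      * rewrite (HI'ne j hj0) in hj. exact (Hd j i0 x1 hj0 hj Hx1).
  - assert (TR : forall r x, tpath I x r -> r <= m -> x <> e -> tpath I' x r).
    { intros r x Hq. induction Hq as [x k hk hind | x y i n Hs Hq IHq]; intros hr hx.
      - destruct (classic (k = i0)) as [->|hk0].
        + apply tp0 with i0; rewrite HI'eq.
          * intros [[h _]|h]; [exact (hk h)| exact (hx h)].
          * apply NNPP; intro hdep.
            assert (hs : span (M i0) (setU1 (setD1 (I i0) x1) e) x).
            { apply span_iff; [rewrite <- HI'eq; apply HI'i| right; exact hdep]. }
            rewrite <- HI'eq in hs. apply span_I' in hs. apply (span_iff _ _ _ (HI i0)) in hs.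
            destruct hs as [h|h]; contradiction.
        + apply tp0 with k; rewrite (HI'ne k hk0); auto.
      - assert (hye : y <> e).
        { intro; subst. apply He. exists i. exact (proj1 (proj2 (proj2 Hs))). }
        apply tpS with y i; [| apply IHq; [lia| exact hye]].
        destruct (classic (i = i0)) as [->|hi0].
        + destruct Hs as [hnx [hdx [hy hyx]]].
          assert (Hdy : ~ indep (M i0) (setU1 (setD1 (I i0) y) e)).
          { intro hind. assert (hp : tpath I e (S n)) by (apply tpS with y i0; [split; [|split; [|split]]; auto| exact Hq]).
            specialize (Hmin _ hp). lia. }
          unfold step. rewrite HI'eq. split; [|split; [|split]].
          * intros [[h _]|h]; [exact (hnx h)| exact (hx h)].
          * intro hind.
            assert (hs : span (M i0) (I i0) x) by (apply span_iff; auto).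
            apply span_I' in hs. rewrite HI'eq in hs. apply (span_iff _ _ _ (eq_ind _ _ (HI'i i0) _ HI'eq)) in hs.
            destruct hs as [h|h]; [|contradiction]. destruct h as [[h _]|h]; [exact (hnx h)| exact (hx h)].
          * left. split; [exact hy|]. intro; subst. exact (Hdy Hindx1).
          * apply KEY; auto.
        + unfold step. rewrite (HI'ne i hi0). exact Hs. }
    apply TR; auto. intro; subst. apply He. exists i0; exact Hx1.
  - intros [J [k [HJ [HJd [HJc [[l Hl] [HJs [f [Hf HJf]]]]]]]]].
    exists J, k. split; [exact HJ|]. split; [exact HJd|]. split; [|split; [|split]].
    + intros w. split.
      * intro h. apply HJc in h. destruct h as [[j hj]| h].
        -- destruct (classic (j = i0)) as [->|hj0].
           ++ rewrite HI'eq in hj. destruct hj as [[h _]| h]; [left; exists i0; auto | right; auto].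
           ++ rewrite (HI'ne j hj0) in hj. left; exists j; auto.
        -- subst. left; exists i0; exact Hx1.
      * intro h. apply HJc. destruct h as [[j hj]| h].
        -- destruct (classic (w = x1)) as [->|hw1]; [right; reflexivity|]. left; exists j.
           destruct (classic (j = i0)) as [->|hj0]; [rewrite HI'eq; left; split; auto| rewrite (HI'ne j hj0); auto].
        -- subst. left; exists i0; rewrite HI'eq; right; reflexivity.
    + exists (l ++ (i0, x1) :: (i0, e) :: nil). intros i w hs. apply in_or_app.
      destruct (classic (I' i w <-> I i w)) as [heq|hne].
      * left. apply Hl. destruct hs as [[a b]|[a b]]; [left; split; [apply heq; auto| auto] | right; split; [auto| intro c; apply b; apply heq; auto]].
      * right. destruct (classic (i = i0)) as [->|hi0].
        -- rewrite HI'eq in hne.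
           destruct (classic (w = x1)) as [->|hw1]; [left; reflexivity|].
           destruct (classic (w = e)) as [->|hwe]; [right; left; reflexivity|].
           exfalso; apply hne; unfold setU1, setD1; split; [intros [[h _]|h]; [auto| contradiction]| intro h; left; split; auto].
        -- rewrite (HI'ne i hi0) in hne. exfalso; apply hne; tauto.
    + intros i hik w. split; intro h.
      * apply (proj1 (span_I' i w)), (proj1 (HJs i hik w)), h.
      * apply (proj2 (HJs i hik w)), (proj2 (span_I' i w)), h.
    + exists f. split; auto. intros w; split; intro h.
      * apply (proj1 (span_I' k w)), (proj1 (HJf w)), h.
      * apply (proj2 (HJf w)), (proj2 (span_I' k w)), h.
Qed.

Lemma mainA : forall n I e, hyps I e -> tpath I e n -> P1 I e.
Proof.
  intro n. induction n as [n IH] using (well_founded_induction lt_wf).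
  intros I e Hh Hp.
  destruct (min_nat (fun m => tpath I e m) n Hp) as [m [Hm Hmin]].
  assert (Hmn : m <= n) by (apply Hmin; exact Hp).
  inversion Hm as [x k hk hind | x x1 i0 m' Hst Hp']; subst.
  - exact (P1_base I e k Hh hk hind).
  - destruct (step_case I e i0 x1 m' Hh Hst Hp' Hmin) as [I' [Hh' [Hp'' Himp]]].
    apply Himp. apply (IH m'); [lia| exact Hh'| exact Hp''].
Qed.

Lemma partA I e : hyps I e -> P1 I e \/ P2 I e.
Proof.
  intros Hh. destruct (classic (exists n, tpath I e n)) as [[n hn]|hno]; [left; exact (mainA n I e Hh hn)| right].
  destruct Hh as [HI [Hd He]].
  assert (RL : forall x, reach I e x -> forall n, tpath I x n -> exists n', tpath I e n').
  { intros x Hr. induction Hr as [|x y i Hr IH Hst]; [eauto|]. intros n hn. apply (IH (S n)). apply tpS with y i; auto. }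
  exists (fun x => bigU I x /\ reach I e x). split; [intros x [h _]; exact h|].
  intros i w hw.
  assert (hr : reach I e w) by (destruct hw as [[_ h]| h]; [exact h| subst; apply r0]).
  destruct (classic (I i w)) as [hIw|hnIw].
  - left. split; [exact hIw | split; [exists i; exact hIw| exact hr]].
  - destruct (classic (indep (M i) (setU1 (I i) w))) as [hind|hdep].
    + exfalso; apply hno. apply (RL w hr 0). apply tp0 with i; auto.
    + right. destruct (FCE (M i) (I i) w (HI i) hdep) as [C [HC [HCw HCI]]].
      exists C. split; [auto|split; [auto|]]. intros c [hc hcw]. split; [apply HCI; auto|]. split; [exists i; apply HCI; auto|].
      apply rS with w i; auto. split; [auto|split; [auto|split; [apply HCI; auto|]]].
      exact (EXCH_I (M i) (I i) C w c (HI i) HC HCw HCI hnIw hc hcw).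
Qed.

Lemma partB_core (J : K -> E -> Prop) (Y : E -> Prop) (HJ : forall i, indep (M i) (J i))
  (HJc : forall y, Y y -> exists i, J i y) :
  forall n (l : list (K * E)) (B : K -> E -> Prop) f, length l <= n ->
  (forall i, indep (M i) (B i)) ->
  (forall i y, Y y -> span (M i) (B i) y) ->
  (forall i x, B i x -> Y x) ->
  (forall i j x, B i x -> B j x -> i = j) ->
  Y f -> (forall i, ~ B i f) ->
  (forall i x, J i x -> Y x -> ~ B i x -> In (i, x) l) -> False.
Proof.
  intro n. induction n as [|n IHn]; intros l B f hlen HB1 HB2 HB3 HB4 HB5a HB5b HB6;
    destruct (HJc f HB5a) as [a ha]; pose proof (HB6 a f ha HB5a (HB5b a)) as hin.
  - destruct l; [exact hin| simpl in hlen; lia].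
  - assert (hspan := HB2 a f HB5a). apply (span_iff _ (B a) f (HB1 a)) in hspan.
    destruct hspan as [h|hdep]; [exact (HB5b a h)|].
    destruct (FCE _ (B a) f (HB1 a) hdep) as [C [HC [HCf HCB]]].
    destruct (classic (exists y, C y /\ ~ J a y)) as [[y [hCy hnJy]]|hno].
    2: { apply (proj1 HC). apply (indep_sub _ _ C (J a) (HJ a)). intros z hz. apply NNPP; intro hn; apply hno; eauto. }
    assert (hyf : y <> f) by (intro; subst; contradiction).
    assert (hBy : B a y) by exact (HCB y hCy hyf).
    pose (B' := fun j x => (j <> a /\ B j x) \/ (j = a /\ ((B j x /\ x <> y) \/ x = f))).
    assert (HB'ne : forall j, j <> a -> B' j = B j).
    { intros j hj. apply set_ext. intros x; unfold B'; split; [intros [[_ h]|[h _]]; [auto|contradiction]| intros h; left; auto]. }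
    assert (HB'eq : B' a = setU1 (setD1 (B a) y) f).
    { apply set_ext. intros x; unfold B', setU1, setD1; split.
      - intros [[h _]|[_ h]]; [contradiction| exact h].
      - intros h; right; auto. }
    pose (dec := fun p q : K * E => excluded_middle_informative (p = q)).
    apply (IHn (remove dec (a, f) l) B' y).
    + assert (h := remove_length_lt dec l (a, f) hin). lia.
    + intros j. destruct (classic (j = a)) as [->|hj]; [rewrite HB'eq| rewrite (HB'ne j hj); auto].
      exact (EXCH_I _ (B a) C f y (HB1 a) HC HCf HCB (HB5b a) hCy hyf).
    + intros j w hw. destruct (classic (j = a)) as [->|hj]; [rewrite HB'eq| rewrite (HB'ne j hj); auto].
      apply (SPAN _ (B a) C f y (HB1 a) HC HCf HCB (HB5b a) hCy hyf). auto.
    + intros j x. destruct (classic (j = a)) as [->|hj]; [rewrite HB'eq| rewrite (HB'ne j hj); eauto].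
      intros [[h _]| h]; [eauto| subst; auto].
    + intros i j x. destruct (classic (i = a)) as [->|hi]; destruct (classic (j = a)) as [->|hj]; auto.
      * rewrite HB'eq, (HB'ne j hj). intros [[h _]|h] hj'; [eauto| subst; exfalso; exact (HB5b j hj')].
      * rewrite HB'eq, (HB'ne i hi). intros hi' [[h _]|h]; [eauto| subst; exfalso; exact (HB5b i hi')].
      * rewrite (HB'ne i hi), (HB'ne j hj). eauto.
    + exact (HB3 a y hBy).
    + intros j. destruct (classic (j = a)) as [->|hj].
      * rewrite HB'eq. intros [[_ h]| h]; [apply h; reflexivity| exact (hyf h)].
      * rewrite (HB'ne j hj). intro h. apply hj. exact (HB4 j a y h hBy).
    + intros i x hJ hY hnB'. apply in_in_remove.
      * intro heq. injection heq; intros; subst. apply hnB'. rewrite HB'eq; right; reflexivity.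
      * apply HB6; auto. intro hBx. apply hnB'. destruct (classic (i = a)) as [->|hi].
        -- rewrite HB'eq. left; split; auto. intro; subst; contradiction.
        -- rewrite (HB'ne i hi); auto.
Qed.

Lemma partB I e : hyps I e -> P1 I e -> P2 I e -> False.
Proof.
  intros [HI [Hd He]] [J [k [HJ [_ [HJc [[l Hl] _]]]]]] [X [hXsub hsp]].
  apply (partB_core J (setU1 X e) HJ) with (n := length l) (l := l) (B := fun i x => I i x /\ X x) (f := e).
  - intros y hy. apply HJc. destruct hy as [h|h]; [left; apply hXsub; auto| right; auto].
  - auto.
  - intros i. apply (indep_sub _ _ _ _ (HI i)). intros z [h _]; auto.
  - intros i y hy. apply hsp. exact hy.
  - intros i x [_ h]. left; exact h.
  - intros i j x [hi _] [hj _]. apply NNPP; intro hij. exact (Hd i j x hij hi hj).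
  - right; reflexivity.
  - intros i [h _]. apply He; exists i; auto.
  - intros i x hJ hY hnB. apply Hl. destruct (classic (I i x)) as [hI|hnI].
    + exfalso. destruct hY as [hX|hxe]; [exact (hnB (conj hI hX))| subst; apply He; exists i; auto].
    + right; split; auto.
Qed.

End Main.

Theorem lemma3p1 (E K : Type) (M : K -> matroid E) (I : K -> E -> Prop) (e : E)
  (hI : forall i, indep (M i) (I i))
  (hdisj : forall i j x, i <> j -> I i x -> I j x -> False)
  (he : ~ bigU I e) :
  let P1 :=
    exists (J : K -> E -> Prop) (k : K),
      (forall i, indep (M i) (J i)) /\
      (forall i j x, i <> j -> J i x -> J j x -> False) /\
      set_eq (bigU J) (setU1 (bigU I) e) /\
      finite_sum_symdiff I J /\
      (forall i, i <> k -> set_eq (span (M i) (J i)) (span (M i) (I i))) /\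
      (exists f, J k f /\ set_eq (span (M k) (setD1 (J k) f)) (span (M k) (I k))) in
  let P2 :=
    exists X : E -> Prop, subset X (bigU I) /\
      forall i, spans (M i) (fun x => I i x /\ X x) (setU1 X e) in
  (P1 \/ P2) /\ ~ (P1 /\ P2).
Proof.
  intros P1x P2x.
  assert (Hh : hyps M I e) by (split; [|split]; auto).
  split.
  - destruct (partA M I e Hh) as [h|h]; [left; exact h| right; exact h].
  - intros [h1 h2]. exact (partB M I e Hh h1 h2).
Qed.
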